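(* Let $A\in\mathbb{R}^{n\times n}$ be Metzler and Hurwitz stable, $b_0\in\mathbb{R}^n_{\ge0}$, $g_0:=-e_n^TA^{-1}b_0$, $g_n:=-e_n^TA^{-1}e_n$, $\beta>0$, and $r\in\big(g_0/(1+\beta g_n),\,g_0\big)$. For $k>0$ consider $$\dot x=Ax-x_nze_n+b_0,\qquad \dot z=-\frac{k}{\beta}z(\beta-z)(r-e_n^Tx),$$ and its equilibrium with $z^*=\dfrac{g_0-r}{g_nr}$ and $x^*=-A^{-1}(b_0-rz^*e_n)$. Then $z^*\in(0,\beta)$ and this equilibrium is locally exponentially stable for all $k>0$.
   Context: $e_i$ standard basis vectors; $x_n=e_n^Tx$. Metzler: all off-diagonal entries nonnegative. Hurwitz stable: all eigenvalues have negative real part. An equilibrium is called locally exponentially stable here if the Jacobian matrix of the vector field at the equilibrium is Hurwitz stable. *)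

(* Defs.v *)
From HB Require Import structures.
From mathcomp Require Import all_boot all_order all_algebra.
From mathcomp Require Import all_classical all_reals all_analysis.
From mathcomp Require Import complex.
Set Implicit Arguments. Unset Strict Implicit. Unset Printing Implicit Defensive.
Import Order.TTheory GRing.Theory Num.Theory.
Local Open Scope ring_scope.

Definition metzler (R : realType) (m : nat) (A : 'M[R]_m) : Prop :=
  forall i j : 'I_m, i != j -> 0 <= A i j.

Definition hurwitz (R : realType) (m : nat) (A : 'M[R]_m) : Prop :=
  forall lambda : R[i],
    eigenvalue (map_mx (fun a : R => (a%:C)%C) A) lambda -> complex.Re lambda < 0.

Definition jacobianM (R : realType) (m : nat) (F : 'cV[R]_m -> 'cV[R]_m)
  (p : 'cV[R]_m) : 'M[R]_m :=
  \matrix_(i, j) derive1 (fun t : R => F (p + t *: delta_mx j 0) i 0) 0.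

(* The closed-loop vector field on states (x, z) in R^(n+1) x R,
   encoded as col_mx x (z%:M) : 'cV_(n.+1 + 1). *)
Definition vfield (R : realType) (n : nat) (A : 'M[R]_n.+1) (b0 : 'cV[R]_n.+1)
  (k beta r : R) (v : 'cV[R]_(n.+1 + 1)) : 'cV[R]_(n.+1 + 1) :=
  let x := usubmx v in
  let z := dsubmx v 0 0 in
  let xn := x ord_max 0 in
  col_mx (A *m x - (xn * z) *: delta_mx ord_max 0 + b0)
         ((- (k / beta) * z * (beta - z) * (r - xn))%:M).

(* Main.v *)
Require Import Defs.
From HB Require Import structures.
From mathcomp Require Import all_boot all_order all_algebra.
From mathcomp Require Import all_classical all_reals all_analysis.
From mathcomp Require Import complex.
From mathcomp Require Import ring lra.
Import Order.TTheory GRing.Theory Num.Theory.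
Local Open Scope ring_scope.
Section S.
Variable R : realType.

Lemma exists_max {m:nat} (i0 : 'I_m) (f : 'I_m -> R) : exists k, forall l, f l <= f k.
Proof. by case: (@Order.TotalTheory.arg_maxP _ _ _ i0 xpredT f isT) => k _ H; exists k => l; apply: H. Qed.

Definition metz {m} (B : 'M[R]_m) := forall i j, i != j -> 0 <= B i j.

Lemma sum_offdiag_ge0 {m} (B : 'M[R]_m) (y : 'I_m -> R) i :
  metz B -> (forall j, 0 <= y j) -> y i = 0 -> 0 <= \sum_j B i j * y j.
Proof.
move=> hB hy hyi; apply: sumr_ge0 => j _.
case: (eqVneq i j) => [<-|hij]; first by rewrite hyi mulr0.
by apply: mulr_ge0; [exact: hB|exact: hy].
Qed.

Lemma comp_pos {m} (B : 'M[R]_m) (p x : 'I_m -> R) :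
  metz B -> (forall i, 0 < p i) -> (forall i, \sum_j B i j * p j < 0) ->
  (forall i, \sum_j B i j * x j <= 0) -> forall i, 0 <= x i.
Proof.
move=> hB hp hBp hBx i.
have [k hk] := exists_max i (fun l => - x l / p l).
rewrite leNgt; apply/negP => xi.
have hpk := hp k.
set t := - x k / p k.
have tpos : 0 < t.
  apply: lt_le_trans (hk i); rewrite divr_gt0 ?hp //; by rewrite oppr_gt0.
set y := fun j => x j + t * p j.
have hy : forall j, 0 <= y j.
  move=> j; have := hk j; rewrite /y -/t => hj.
  have hpj := hp j.
  rewrite -subr_ge0 in hj.
  have : 0 <= (t - - x j / p j) * p j by apply: mulr_ge0 => //; exact: ltW.
  have e : (t - - x j / p j) * p j = x j + t * p j.
    rewrite /t; field; by rewrite !gt_eqF.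
  by rewrite e.
have hyk : y k = 0.
  rewrite /y /t; field; by rewrite !gt_eqF.
have := sum_offdiag_ge0 B y k hB hy hyk.
have -> : \sum_j B k j * y j = \sum_j B k j * x j + t * \sum_j B k j * p j.
  rewrite mulr_sumr -big_split /=; apply: eq_bigr => j _; rewrite /y; ring.
have := hBx k; have := hBp k => h1 h2.
have : t * \sum_j B k j * p j < 0 by rewrite pmulr_rlt0.
move=> h3 h4. lra.
Qed.
Lemma sumBu {m} (B : 'M[R]_m) (u : R) (p : 'I_m -> R) i :
  \sum_j (B - u%:M) i j * p j = \sum_j B i j * p j - u * p i.
Proof.
rewrite (bigD1 i) //= [X in _ = X - _](bigD1 i) //= !mxE eqxx mulr1n.
rewrite (eq_bigr (fun j => B i j * p j)); last first.
  by move=> j /negbTE hj; rewrite !mxE eq_sym hj mulr0n subr0.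
ring.
Qed.

Lemma mulmx_sum {m} (B : 'M[R]_m) (x : 'cV[R]_m) i :
  (B *m x) i 0 = \sum_j B i j * x j 0.
Proof. by rewrite mxE. Qed.

Lemma core {m} (B : 'M[R]_m) : metz B ->
  (forall u, 0 <= u -> \det (B - u%:M) != 0) ->
  exists p : 'I_m -> R, (forall i, 0 < p i) /\ (forall i, \sum_j B i j * p j < 0).
Proof.
move=> hB hdet.
pose S u := exists p : 'I_m -> R, (forall i, 0 < p i) /\
   (forall i, \sum_j B i j * p j - u * p i < 0).
have Sup : forall u u', u <= u' -> S u -> S u'.
  move=> u u' huu' [p [hp hBp]]; exists p; split => // i.
  have := hBp i; have := hp i => h1 h2. nra.
case: (pselect (S 0)) => [[p [hp hBp]]|nS0].
  by exists p; split => // i; have := hBp i; rewrite mul0r subr0.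
exfalso.
pose u0 := 1 + \sum_i \sum_j `|B i j|.
have Su0 : S u0.
  exists (fun _ => 1); split => // i; rewrite mulr1.
  have h1 : \sum_j B i j * 1 <= \sum_i \sum_j `|B i j|.
    apply: le_trans (_ : \sum_j `|B i j| <= _).
      by apply: ler_sum => j _; rewrite mulr1 ler_norm.
    rewrite [X in _ <= X](bigD1 i) //= lerDl; apply: sumr_ge0 => l _; apply: sumr_ge0 => j _.
    exact: normr_ge0.
  rewrite /u0; lra.
pose T : set R := fun u => 0 <= u /\ ~ S u.
have T0 : T 0 by split.
have Tub : forall u, T u -> u <= u0.
  move=> u [_ hu]; rewrite leNgt; apply/negP => h; apply: hu; apply: Sup Su0.
  exact: ltW.
have hsT : has_sup T by split; [exists 0 | exists u0 => u /Tub].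
set us := sup T.
have us0 : 0 <= us by apply: sup_upper_bound.
have Sgt : forall u, us < u -> S u.
  move=> u hu; case: (pselect (S u)) => // nSu.
  have : T u by split => //; apply: le_trans us0 (ltW hu).
  move/(sup_upper_bound hsT); rewrite -/us => h; by move: (lt_le_trans hu h); rewrite ltxx.
have [ps [hps hMps]] : exists ps : 'I_m -> R, (forall i, 0 < ps i) /\
    (forall i, \sum_j B i j * ps j - us * ps i = -1).
  have Mu : B - us%:M \in unitmx by rewrite unitmxE unitfE; exact: hdet.
  pose N := invmx (B - us%:M).
  pose one := const_mx 1 : 'cV[R]_m.
  pose P := - (N *m one).
  have MP : (B - us%:M) *m P = - one by rewrite mulmxN mulmxA mulmxV // mul1mx.
  have hMP : forall i, \sum_j B i j * P j 0 - us * P i 0 = -1.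
    by move=> i; rewrite -sumBu -mulmx_sum MP !mxE.
  have Pge0 : forall i, 0 <= P i 0.
    move=> i0; rewrite leNgt; apply/negP => hPi0.
    pose K := \sum_i \sum_j `|N i j|.
    pose Pn := \sum_i `|P i 0|.
    pose a := - P i0 0.
    have a0 : 0 < a by rewrite /a oppr_gt0.
    have K0 : 0 <= K by apply: sumr_ge0 => i _; apply: sumr_ge0 => j _; exact: normr_ge0.
    have Pn0 : 0 <= Pn by apply: sumr_ge0 => i _; exact: normr_ge0.
    have aPn : a <= Pn.
      apply: le_trans (_ : `|P i0 0| <= _); first by rewrite -normrN ler_norm.
      rewrite /Pn (bigD1 i0) //= lerDl; apply: sumr_ge0 => i _; exact: normr_ge0.
    pose D := 4 * (K + 1) * (Pn + 1).
    have D0 : 0 < D by rewrite /D; apply: mulr_gt0; [apply: mulr_gt0|]; lra.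
    pose d := a / D.
    have d0 : 0 < d by rewrite /d divr_gt0.
    have hdD : d * D = a by rewrite /d divfK // gt_eqF.
    have [p [hp hBp]] := Sgt (us + d) (ltr_pwDr d0 (lexx us)).
    have Mu' : B - (us + d)%:M \in unitmx.
      rewrite unitmxE unitfE; apply: hdet; exact: addr_ge0 (ltW d0).
    pose v := - (invmx (B - (us + d)%:M) *m one).
    have Mv : (B - (us + d)%:M) *m v = - one by rewrite mulmxN mulmxA mulmxV // mul1mx.
    have v0 : forall i, 0 <= v i 0.
      apply: (@comp_pos _ (B - (us + d)%:M) p (fun i => v i 0)).
      - move=> i j hij; rewrite !mxE (negbTE hij) mulr0n subr0; exact: hB.
      - exact: hp.
      - by move=> i; rewrite sumBu; apply: hBp.
      - by move=> i; rewrite -mulmx_sum Mv !mxE lerN10.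
    have hv : v = P + d *: (N *m v).
      have -> : P + d *: (N *m v) = N *m ((B - us%:M) *m v).
        rewrite (_ : B - us%:M = (B - (us + d)%:M) + d%:M); last first.
          by rewrite raddfD /= opprD addrA subrK.
        by rewrite mulmxDl Mv mulmxDr mul_scalar_mx scalemxAr /P mulmxN.
      by rewrite /N mulKmx.
    pose w i := (N *m v) i 0.
    pose V := \sum_i v i 0.
    pose W := \sum_i `|w i|.
    have V0 : 0 <= V by apply: sumr_ge0 => i _; exact: v0.
    have W0 : 0 <= W by apply: sumr_ge0 => i _; exact: normr_ge0.
    have hvi : forall i, v i 0 = P i 0 + d * w i.
      by move=> i; rewrite {1}hv [LHS]mxE [X in _ + X]mxE.
    have vV : forall j, v j 0 <= V.
      move=> j; rewrite /V (bigD1 j) //= lerDl; apply: sumr_ge0 => l _; exact: v0.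
    have WKV : W <= K * V.
      apply: le_trans (_ : \sum_i \sum_j `|N i j| * V <= _); last first.
        by rewrite /K mulr_suml; apply: ler_sum => i _; rewrite mulr_suml.
      apply: ler_sum => i _; rewrite /w mxE.
      apply: le_trans (ler_norm_sum _ _ _) _; apply: ler_sum => j _.
      rewrite normrM (ger0_norm (v0 j)); apply: ler_wpM2l; [exact: normr_ge0|exact: vV].
    have VPW : V <= Pn + d * W.
      rewrite /V (eq_bigr _ (fun i _ => hvi i)) big_split /= -mulr_sumr.
      apply: lerD; first by apply: ler_sum => i _; exact: ler_norm.
      apply: ler_wpM2l; first exact: ltW.
      by apply: ler_sum => i _; exact: ler_norm.
    have adW : a <= d * W.
      have := hvi i0; have := v0 i0 => h1 h2.
      have : `|w i0| <= W.
        rewrite /W (bigD1 i0) //= lerDl; apply: sumr_ge0 => l _; exact: normr_ge0.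
      move=> h4; have hw : w i0 <= W by apply: le_trans (ler_norm _) h4.
      have := ler_wpM2l (ltW d0) hw; rewrite /a; lra.
    have h0 : d * (4 * (K + 1)) < 1.
      rewrite /D in hdD; nra.
    have h1 : d * K * Pn * 4 < a.
      rewrite /D in hdD; nra.
    have h2 := ler_wpM2l K0 VPW.
    have h3 : W <= K * Pn + d * K * W.
      apply: le_trans WKV _; apply: le_trans h2 _; lra.
    have h4 : 0 <= d * (K * Pn + d * K * W - W).
      apply: mulr_ge0; [exact: ltW|lra].
    have h5 : 0 <= d * ((1 - d * (4 * (K + 1))) * W).
      apply: mulr_ge0; [exact: ltW|apply: mulr_ge0 => //; lra].
    have h6 : 0 <= d * d * W by rewrite mulr_ge0 // mulr_ge0 // ltW.
    lra.
  exists (fun i => P i 0); split; last exact: hMP.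
  move=> i; rewrite lt_neqAle Pge0 andbT; apply/eqP => hPi.
  have := hMP i; rewrite -hPi mulr0 subr0 => h.
  have := sum_offdiag_ge0 B (fun j => P j 0) i hB Pge0 (esym hPi).
  rewrite h; lra.
pose eps := 1 / (1 + \sum_i ps i).
have sum_ge : forall i, ps i <= \sum_i ps i.
  move=> i; rewrite (bigD1 i) //= lerDl; apply: sumr_ge0 => l _; exact: ltW.
have hsum0 : 0 <= \sum_i ps i by apply: sumr_ge0 => l _; exact: ltW.
have eps0 : 0 < eps by rewrite /eps divr_gt0 // ltr_pwDl.
have Seps : S (us - eps).
  exists ps; split => // i; have := hMps i; have := sum_ge i.
  have : eps * ps i < 1.
    rewrite /eps mul1r ltr_pdivrMl ?ltr_pwDl // mulr1; have := sum_ge i; lra.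
  lra.
have [e [Te0 Te1] he] := sup_adherent eps0 hsT.
apply: Te1; apply: Sup Seps; exact: ltW.
Qed.

Lemma eq_ler (x y : R) : x = y -> x <= y. Proof. by move->. Qed.

Definition Qf {m} (A' : 'M[R]_m) (pi q v : 'I_m -> R) :=
  \sum_l (pi l / q l) * v l * \sum_k v k * A' k l.

Lemma quad {m} (A' : 'M[R]_m) (pi q : 'I_m -> R) :
  metz A' -> (forall i, 0 < pi i) -> (forall i, 0 < q i) ->
  (forall k, \sum_l A' k l * pi l < 0) -> (forall l, \sum_k q k * A' k l < 0) ->
  forall v, Qf A' pi q v <= 0 /\ (0 <= Qf A' pi q v -> forall k, v k = 0).
Proof.
move=> hA hpi hq hr hs v.
pose g k := v k ^+ 2 / q k * (\sum_l A' k l * pi l) +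
            pi k * v k ^+ 2 / (q k ^+ 2) * (\sum_i q i * A' i k).
have gle0 : forall k, g k <= 0.
  move=> k; rewrite /g; have := hr k; have := hs k; have := hq k; have := hpi k.
  move=> h1 h2 h3 h4.
  have e1 : 0 <= v k ^+ 2 / q k by apply: divr_ge0; [exact: sqr_ge0|exact: ltW].
  have e2 : 0 <= pi k * v k ^+ 2 / (q k ^+ 2).
    by apply: divr_ge0; [apply: mulr_ge0; [exact: ltW|exact: sqr_ge0] | exact: sqr_ge0].
  have := ler_wpM2l e1 (ltW h4); have := ler_wpM2l e2 (ltW h3).
  rewrite !mulr0; lra.
have hQ : Qf A' pi q v <= \sum_k g k / 2.
  rewrite /Qf.
  apply: le_trans (_ : \sum_l \sum_k (pi l * A' k l * v k ^+ 2 / q k +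
       q k * A' k l * pi l * v l ^+ 2 / q l ^+ 2) / 2 <= _).
    apply: ler_sum => l _; rewrite mulr_sumr; apply: ler_sum => k _.
    have ql := hq l; have qk := hq k; have pl := hpi l.
    case: (eqVneq k l) => [->|hkl].
      by apply: eq_ler; field; rewrite gt_eqF.
    have hA' := hA k l hkl.
    rewrite -subr_ge0.
    have -> : (pi l * A' k l * v k ^+ 2 / q k + q k * A' k l * pi l * v l ^+ 2 / q l ^+ 2) / 2 -
       pi l / q l * v l * (v k * A' k l) =
       A' k l * (pi l / (2 * q k * q l ^+ 2)) * (q l * v k - q k * v l) ^+ 2.
      by field; rewrite ?gt_eqF.
    apply: mulr_ge0; last exact: sqr_ge0.
    apply: mulr_ge0 => //; apply: divr_ge0; first exact: ltW.
    by rewrite !mulr_ge0 // ?exprn_ge0 ltW.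
  rewrite -mulr_suml; under eq_bigr do rewrite -mulr_suml.
  rewrite -mulr_suml; apply: ler_wpM2r; first lra.
  under eq_bigr do rewrite big_split /=.
  rewrite big_split /= exchange_big /= [X in _ <= X]big_split /=.
  apply: lerD; apply: eq_ler; apply: eq_bigr => k _.
  - by rewrite mulr_sumr; apply: eq_bigr => l _; ring.
  - by rewrite mulr_sumr; apply: eq_bigr => l _; ring.
have hsum : \sum_k g k / 2 <= 0.
  rewrite -mulr_suml; apply: mulr_le0_ge0; last lra.
  by apply: sumr_le0 => k _; exact: gle0.
split; first exact: le_trans hQ hsum.
move=> hQ0 k.
have hg0 : \sum_k g k = 0.
  apply/eqP; rewrite eq_le; apply/andP; split; first by apply: sumr_le0 => i _.
  rewrite -mulr_suml in hQ; have := le_trans hQ0 hQ; lra.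
have gk0 : g k = 0.
  have := hg0; rewrite (bigD1 k) //= => h.
  have : \sum_(i | i != k) g i <= 0 by apply: sumr_le0 => i _.
  have := gle0 k; lra.
move: gk0; rewrite /g.
have := hr k; have := hs k; have := hq k; have := hpi k => h1 h2 h3 h4.
set x := v k ^+ 2 => hx.
have x0 : 0 <= x by exact: sqr_ge0.
have : x * (1 / q k * (\sum_l A' k l * pi l) + pi k / q k ^+ 2 * (\sum_i q i * A' i k)) = 0.
  by rewrite -[RHS]hx; field; rewrite gt_eqF.
move/eqP; rewrite mulf_eq0 => /orP [/eqP|]; first by move/eqP; rewrite sqrf_eq0 => /eqP.
have : 1 / q k * (\sum_l A' k l * pi l) < 0 by rewrite pmulr_rlt0 // divr_gt0.
have : pi k / q k ^+ 2 * (\sum_i q i * A' i k) < 0 by rewrite pmulr_rlt0 // divr_gt0 // exprn_gt0.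
move=> a1 a2 /eqP; lra.
Qed.

Lemma hurwitz_det {m} (A : 'M[R]_m) : hurwitz A ->
  forall u, 0 <= u -> \det (A - u%:M) != 0.
Proof.
move=> hA u u0; apply/negP => /det0P [v v0 hv].
have := hA (u%:C)%C.
have -> : complex.Re (u%:C)%C = u by [].
rewrite ltNge u0 => /(_ _)/implyP; apply => //.
apply/eigenvalueP; exists (map_mx (real_complex R) v).
  rewrite -map_mxM.
  have -> : v *m A = u *: v.
    by apply/eqP; rewrite -subr_eq0 -mul_mx_scalar -mulmxBr hv.
  by rewrite map_mxZ.
by rewrite map_mx_eq0.
Qed.
End S.

Arguments metz {R m} B.
Arguments exists_max {R m} i0 f.
Arguments sum_offdiag_ge0 {R m} B y i.
Arguments comp_pos {R m} B p x.
Arguments sumBu {R m} B u p i.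
Arguments mulmx_sum {R m} B x i.
Arguments core {R m} B.
Arguments Qf {R m} A' pi q v.
Arguments quad {R m} A' pi q.
Arguments hurwitz_det {R m} A.
Arguments eq_ler {R} x y.
Section C.
Variable R : realType.
Local Notation Re := (@complex.Re R).
Local Notation Im := (@complex.Im R).
Lemma ReD' (x y : R[i]) : Re (x + y) = Re x + Re y. Proof. by case: x y => [a b] [c d]. Qed.
Lemma ImD' (x y : R[i]) : Im (x + y) = Im x + Im y. Proof. by case: x y => [a b] [c d]. Qed.
Lemma Re_sum {m} (f : 'I_m -> R[i]) : Re (\sum_i f i) = \sum_i Re (f i).
Proof. by apply: (big_morph _ ReD'). Qed.
Lemma Im_sum {m} (f : 'I_m -> R[i]) : Im (\sum_i f i) = \sum_i Im (f i).
Proof. by apply: (big_morph _ ImD'). Qed.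
Lemma ReMR (x : R[i]) r : Re (x * (r%:C)%C) = Re x * r.
Proof. case: x => a b /=. ring. Qed.
Lemma ImMR (x : R[i]) r : Im (x * (r%:C)%C) = Im x * r.
Proof. case: x => a b /=. ring. Qed.
Lemma ReM' (x y : R[i]) : Re (x * y) = Re x * Re y - Im x * Im y.
Proof. by case: x y => [a b] [c d]. Qed.
Lemma ImM' (x y : R[i]) : Im (x * y) = Re x * Im y + Im x * Re y.
Proof. case: x y => [a b] [c d] /=. ring. Qed.
Lemma c_eq0 (x : R[i]) : Re x = 0 -> Im x = 0 -> x = 0.
Proof. by case: x => a b /= -> ->. Qed.
End C.
Section J.
Variable R : realType.
Variables (n : nat) (A : 'M[R]_n.+1) (b0 : 'cV[R]_n.+1) (kk beta r : R) (xs : 'cV[R]_n.+1) (zs : R).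

Lemma der_cubic (f : R -> R) (c0 c1 c2 c3 : R) :
  (forall t, f t = c0 + c1 * t + c2 * t ^+ 2 + c3 * t ^+ 3) -> derive1 f 0 = c1.
Proof.
move=> hf.
have -> : f = horner (c0%:P + c1 *: 'X + c2 *: 'X^2 + c3 *: 'X^3).
  apply/funext => t; rewrite hf !hornerE /=. ring.
rewrite derive1E derive_val !(derivD, derivZ, derivC, derivX, derivXn) !hornerE /=. ring.
Qed.

Definition dl (j : 'I_(n.+1 + 1)) (l : 'I_n.+1) : R := (lshift 1 l == j)%:R.
Definition dz (j : 'I_(n.+1 + 1)) : R := (rshift n.+1 (ord0 : 'I_1) == j)%:R.

Lemma vf_top j t k :
  vfield A b0 kk beta r (col_mx xs (zs%:M : 'M[R]_1) + t *: delta_mx j 0) (lshift 1 k) 0 =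
  \sum_l A k l * (xs l 0 + t * dl j l) -
   (xs ord_max 0 + t * dl j ord_max) * (zs + t * dz j) * (k == ord_max)%:R + b0 k 0.
Proof.
rewrite /vfield col_mxEu !(col_mxEu, col_mxEd, mxE) /=. under eq_bigr do rewrite !(col_mxEu, col_mxEd, mxE) /=. rewrite !eqxx !andbT mulr1n. by under eq_bigr do rewrite andbT.
Qed.

Lemma vf_bot j t :
  vfield A b0 kk beta r (col_mx xs (zs%:M : 'M[R]_1) + t *: delta_mx j 0) (rshift n.+1 ord0) 0 =
  - (kk / beta) * (zs + t * dz j) * (beta - (zs + t * dz j)) * (r - (xs ord_max 0 + t * dl j ord_max)).
Proof.
rewrite /vfield col_mxEd !(col_mxEu, col_mxEd, mxE) /=.
by rewrite !eqxx !andbT !mulr1n.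
Qed.

Hypothesis hxsn : xs ord_max 0 = r.

Definition cc := kk / beta * zs * (beta - zs).

Lemma jac_entry (i j : 'I_(n.+1 + 1)) :
  jacobianM (vfield A b0 kk beta r) (col_mx xs (zs%:M : 'M[R]_1)) i j =
  match fintype.split i with
  | inl k => \sum_l A k l * dl j l - (r * dz j + zs * dl j ord_max) * (k == ord_max)%:R
  | inr _ => cc * dl j ord_max
  end.
Proof.
rewrite /jacobianM mxE.
case: (split_ordP i) => k ->; rewrite ?split_lshift ?split_rshift.
  apply: (@der_cubic _ (\sum_l A k l * xs l 0 - r * zs * (k == ord_max)%:R + b0 k 0) _
     (- (dl j ord_max * dz j) * (k == ord_max)%:R) 0) => t.
  rewrite vf_top.
  have -> : \sum_l A k l * (xs l 0 + t * dl j l) =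
     \sum_l A k l * xs l 0 + t * \sum_l A k l * dl j l.
    rewrite mulr_sumr -big_split /=; apply: eq_bigr => l _; ring.
  rewrite hxsn; ring.
rewrite (_ : k = ord0); last by apply/val_inj; case: k => [[]].
apply: (@der_cubic _ 0 _ (kk / beta * dz j * (beta - zs - zs) * dl j ord_max)
   (- (kk / beta) * dz j ^+ 2 * dl j ord_max)) => t.
rewrite vf_bot hxsn /cc.
ring.
Qed.

Lemma split_l m p (i : 'I_m) : fintype.split (lshift p i) = inl i.
Proof. exact: (unsplitK (inl i : 'I_m + 'I_p)). Qed.
Lemma split_r m p (j : 'I_p) : fintype.split (rshift m j) = inr j.
Proof. exact: (unsplitK (inr j : 'I_m + 'I_p)). Qed.

Lemma sum_pick {m} (f : 'I_m -> R) (i : 'I_m) : \sum_l f l * (l == i)%:R = f i.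
Proof.
rewrite (bigD1 i) //= eqxx mulr1 big1 ?addr0 // => l /negbTE ->; exact: mulr0.
Qed.

Definition Ap := \matrix_(k, l) (A k l - zs * (l == ord_max)%:R * (k == ord_max)%:R).
Local Notation Jm := (jacobianM (vfield A b0 kk beta r) (col_mx xs (zs%:M : 'M[R]_1))).
Local Notation s0 := (rshift n.+1 (ord0 : 'I_1)).

Lemma J_ll k l : Jm (lshift 1 k) (lshift 1 l) = Ap k l.
Proof.
rewrite jac_entry split_l /dl /dz mxE eq_rlshift mulr0 add0r.
under eq_bigr do rewrite eq_lshift.
by rewrite sum_pick eq_lshift eq_sym.
Qed.

Lemma J_ls k : Jm (lshift 1 k) s0 = - r * (k == ord_max)%:R.
Proof.
rewrite jac_entry split_l /dl /dz eqxx eq_lrshift mulr0 addr0 mulr1.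
rewrite big1 ?sub0r ?mulNr // => l _; by rewrite eq_lrshift mulr0.
Qed.

Lemma J_sl l : Jm s0 (lshift 1 l) = cc * (l == ord_max)%:R.
Proof. by rewrite jac_entry split_r /dl eq_lshift eq_sym. Qed.

Lemma J_ss : Jm s0 s0 = 0.
Proof. by rewrite jac_entry split_r /dl eq_lrshift mulr0. Qed.

Lemma col_l (y : 'I_(n.+1 + 1) -> R) l : \sum_i y i * Jm i (lshift 1 l) =
  \sum_k y (lshift 1 k) * Ap k l + y s0 * (cc * (l == ord_max)%:R).
Proof.
rewrite big_split_ord big_ord1 /=; under eq_bigr do rewrite J_ll.
by rewrite J_sl.
Qed.

Lemma col_s (y : 'I_(n.+1 + 1) -> R) : \sum_i y i * Jm i s0 = - r * y (lshift 1 ord_max).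
Proof.
rewrite big_split_ord big_ord1 /= J_ss mulr0 addr0; under eq_bigr do rewrite J_ls.
rewrite -(sum_pick (fun k => - r * y (lshift 1 k))); apply: eq_bigr => k _; ring.
Qed.

Lemma Gq (y : 'I_(n.+1 + 1) -> R) (pi q : 'I_n.+1 -> R) : r != 0 ->
  q ord_max != 0 ->
  \sum_l (pi l / q l) * y (lshift 1 l) * (\sum_i y i * Jm i (lshift 1 l)) +
  (cc * (pi ord_max / q ord_max) / r) * y s0 * (\sum_i y i * Jm i s0) =
  Qf Ap pi q (fun l => y (lshift 1 l)).
Proof.
move=> r0 q0; rewrite col_s /Qf.
under eq_bigr do rewrite col_l mulrDr.
rewrite big_split /=.
rewrite [X in _ + X + _ = _](eq_bigr (fun l => (pi l / q l * y (lshift 1 l) * (y s0 * cc)) * (l == ord_max)%:R)); last first.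
  by move=> l _; ring.
rewrite sum_pick.
field.
by rewrite q0 r0.
Qed.
End J.

Theorem mainTheorem19 (R : realType) (n : nat) (A : 'M[R]_n.+1)
  (b0 : 'cV[R]_n.+1) (beta r : R) :
  metzler A -> hurwitz A ->
  (forall i, 0 <= b0 i 0) ->
  0 < beta ->
  let g0 := - (invmx A *m b0) ord_max 0 in
  let gn := - (invmx A *m (delta_mx ord_max 0 : 'cV[R]_n.+1)) ord_max 0 in
  g0 / (1 + beta * gn) < r -> r < g0 ->
  let zs := (g0 - r) / (gn * r) in
  let xs := - (invmx A *m (b0 - (r * zs) *: (delta_mx ord_max 0 : 'cV[R]_n.+1))) in
  (0 < zs /\ zs < beta) /\
  (forall k : R, 0 < k -> hurwitz (jacobianM (vfield A b0 k beta r) (col_mx xs zs%:M))).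
Proof.
move=> hM hH hb hbeta g0 gn hr1 hr2 zs xs.
have metzA : metz A by exact: hM.
have hA0 := hurwitz_det A hH.
have Au : A \in unitmx.
  have := hA0 0 (lexx 0).
  rewrite (_ : (0:R)%:M = 0); last by apply/matrixP => i j; rewrite !mxE mul0rn.
  by rewrite subr0 unitmxE unitfE.
have [pi [hpi hApi]] := core A metzA hA0.
have metzAT : metz A^T by move=> i j hij; rewrite mxE; apply: hM; rewrite eq_sym.
have hAT0 : forall u, 0 <= u -> \det (A^T - u%:M) != 0.
  by move=> u hu; rewrite -(tr_scalar_mx n.+1 u) -linearB det_tr; exact: hA0.
have [q [hq hATq]] := core A^T metzAT hAT0.
have hqA : forall l, \sum_k q k * A k l < 0.
  move=> l; rewrite (eq_bigr (fun k => A^T l k * q k)) ?hATq // => k _.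
  by rewrite mxE mulrC.
have hpos : forall x : 'cV[R]_n.+1, (forall i, (A *m x) i 0 <= 0) -> forall i, 0 <= x i 0.
  move=> x hx; apply: (comp_pos A pi (fun i => x i 0)) => // i.
  rewrite -mulmx_sum; exact: hx.
have AN : forall v : 'cV[R]_n.+1, A *m (- (invmx A *m v)) = - v.
  by move=> v; rewrite mulmxN mulmxA mulmxV // mul1mx.
have g0ge : 0 <= g0.
  have := hpos (- (invmx A *m b0)) _ ord_max; rewrite mxE; apply.
  by move=> i; rewrite AN mxE oppr_le0; exact: hb.
have gnpos : 0 < gn.
  pose y := - (invmx A *m (delta_mx ord_max 0 : 'cV[R]_n.+1)).
  have Ay : forall i, (A *m y) i 0 = - (delta_mx ord_max 0 : 'cV[R]_n.+1) i 0.
    by move=> i; rewrite /y AN mxE.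
  have hy := hpos y (fun i => ltac:(rewrite Ay oppr_le0 mxE; exact: ler0n)).
  have -> : gn = y ord_max 0 by rewrite /gn /y !mxE.
  rewrite lt_neqAle hy andbT; apply/eqP => hyn.
  have := sum_offdiag_ge0 A (fun j => y j 0) ord_max metzA hy (esym hyn).
  rewrite -mulmx_sum Ay mxE !eqxx /=; lra.
have hg : 0 < 1 + beta * gn by have := mulr_gt0 hbeta gnpos; lra.
have rpos : 0 < r by apply: le_lt_trans hr1; exact: divr_ge0 g0ge (ltW hg).
have hg0r : g0 < r * (1 + beta * gn) by rewrite -ltr_pdivrMr.
have gr0 : gn * r != 0 by rewrite mulf_neq0 // gt_eqF.
have hzs : zs * (gn * r) = g0 - r by rewrite /zs divfK.
have zspos : 0 < zs by rewrite /zs divr_gt0 ?mulr_gt0 // subr_gt0.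
have zsb : zs < beta.
  rewrite /zs ltr_pdivrMr ?mulr_gt0 //; lra.
split; first by split.
move=> kk hk lam /eigenvalueP [u hu u0].
have hxsn : xs ord_max 0 = r.
  have eg0 : (invmx A *m b0) ord_max 0 = - g0 by rewrite /g0 opprK.
  have egn : (invmx A *m (delta_mx ord_max 0 : 'cV[R]_n.+1)) ord_max 0 = - gn by rewrite /gn opprK.
  rewrite /xs mulmxBr -scalemxAr.
  move: eg0 egn; set X := invmx A *m b0; set Y := invmx A *m _ => eg0 egn.
  rewrite !mxE in eg0 egn *; rewrite eg0 egn; lra.
have hcc : 0 < cc R kk beta zs.
  rewrite /cc; apply: mulr_gt0; [apply: mulr_gt0; [exact: divr_gt0|exact: zspos]|].
  by rewrite subr_gt0.
have eqj : forall j, \sum_i u 0 i * ((jacobianM (vfield A b0 kk beta r) (col_mx xs (zs%:M : 'cV[R]_1)) i j)%:C)%C = lam * u 0 j.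
  move=> j; move/matrixP: (hu) => /(_ 0 j); rewrite [LHS]mxE [RHS]mxE => <-.
  by apply: eq_bigr => i _; rewrite [in RHS]mxE.
pose a i := complex.Re (u 0 i).
pose b i := complex.Im (u 0 i).
pose al := complex.Re lam.
pose be := complex.Im lam.
have RA : forall j, \sum_i a i * jacobianM (vfield A b0 kk beta r) (col_mx xs (zs%:M : 'cV[R]_1)) i j = al * a j - be * b j.
  move=> j; have := congr1 (@complex.Re R) (eqj j); rewrite Re_sum ReM' => <-.
  by apply: eq_bigr => i _; rewrite ReMR.
have RB : forall j, \sum_i b i * jacobianM (vfield A b0 kk beta r) (col_mx xs (zs%:M : 'cV[R]_1)) i j = al * b j + be * a j.
  move=> j; have := congr1 (@complex.Im R) (eqj j); rewrite Im_sum ImM' => <-.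
  apply: eq_bigr => i _; rewrite ImMR /b /a /be /al; ring.
rewrite ltNge; apply/negP => hal.
have hr0 : r != 0 by rewrite gt_eqF.
have hq0 : forall i, q i != 0 by move=> i; rewrite gt_eqF.
pose d l := pi l / q l.
pose ew := cc R kk beta zs * d ord_max / r.
have hd : forall l, 0 < d l by move=> l; rewrite divr_gt0.
have hew : 0 < ew by rewrite /ew divr_gt0 // mulr_gt0.
have Ga := Gq R n A b0 kk beta r xs zs hxsn a pi q hr0 (hq0 ord_max).
have Gb := Gq R n A b0 kk beta r xs zs hxsn b pi q hr0 (hq0 ord_max).
rewrite (eq_bigr (fun l => d l * a (lshift 1 l) * (al * a (lshift 1 l) - be * b (lshift 1 l))))
  in Ga; last by move=> l _; rewrite RA.
rewrite (eq_bigr (fun l => d l * b (lshift 1 l) * (al * b (lshift 1 l) + be * a (lshift 1 l))))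
  in Gb; last by move=> l _; rewrite RB.
rewrite RA -/ew in Ga; rewrite RB -/ew in Gb.
set s0 := rshift n.+1 (ord0 : 'I_1) in Ga Gb.
have key : Qf (Ap R n A zs) pi q (fun l => a (lshift 1 l)) +
           Qf (Ap R n A zs) pi q (fun l => b (lshift 1 l)) =
   al * (\sum_l d l * (a (lshift 1 l) ^+ 2 + b (lshift 1 l) ^+ 2) + ew * (a s0 ^+ 2 + b s0 ^+ 2)).
  rewrite -Ga -Gb.
  have e1 : \sum_l d l * a (lshift 1 l) * (al * a (lshift 1 l) - be * b (lshift 1 l)) +
            \sum_l d l * b (lshift 1 l) * (al * b (lshift 1 l) + be * a (lshift 1 l)) =
            al * \sum_l d l * (a (lshift 1 l) ^+ 2 + b (lshift 1 l) ^+ 2).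
    by rewrite -big_split mulr_sumr; apply: eq_bigr => l _ /=; ring.
  rewrite [RHS]mulrDr -e1; ring.
have W0 : 0 <= \sum_l d l * (a (lshift 1 l) ^+ 2 + b (lshift 1 l) ^+ 2) + ew * (a s0 ^+ 2 + b s0 ^+ 2).
  apply: addr_ge0; last by apply: mulr_ge0; [exact: ltW|apply: addr_ge0; exact: sqr_ge0].
  apply: sumr_ge0 => l _; apply: mulr_ge0; [exact: ltW|apply: addr_ge0; exact: sqr_ge0].
have metzAp : metz (Ap R n A zs).
  move=> k l hkl; rewrite mxE.
  have h0 : (l == ord_max) && (k == ord_max) = false.
    apply/negP => /andP [/eqP hl /eqP hk']; move: hkl; by rewrite hl hk' eqxx.
  rewrite -mulrA -natrM mulnb h0 mulr0 subr0; exact: hM.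
have hApi' : forall k, \sum_l Ap R n A zs k l * pi l < 0.
  move=> k; rewrite (eq_bigr (fun l => A k l * pi l - (zs * (k == ord_max)%:R * pi l) * (l == ord_max)%:R)); last by move=> l _; rewrite mxE; ring.
  rewrite sumrB sum_pick; have := hApi k.
  have : 0 <= zs * (k == ord_max)%:R * pi ord_max.
    by apply: mulr_ge0; [apply: mulr_ge0; [exact: ltW|exact: ler0n]|exact: ltW].
  lra.
have hqAp : forall l, \sum_k q k * Ap R n A zs k l < 0.
  move=> l; rewrite (eq_bigr (fun k => q k * A k l - (zs * (l == ord_max)%:R * q k) * (k == ord_max)%:R)); last by move=> k _; rewrite mxE; ring.
  rewrite sumrB sum_pick; have := hqA l.
  have : 0 <= zs * (l == ord_max)%:R * q ord_max.
    by apply: mulr_ge0; [apply: mulr_ge0; [exact: ltW|exact: ler0n]|exact: ltW].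
  lra.
have [qa1 qa2] := quad (Ap R n A zs) pi q metzAp hpi hq hApi' hqAp (fun l => a (lshift 1 l)).
have [qb1 qb2] := quad (Ap R n A zs) pi q metzAp hpi hq hApi' hqAp (fun l => b (lshift 1 l)).
have hW := mulr_ge0 hal W0.
have ha : forall k, a (lshift 1 k) = 0 by apply: qa2; lra.
have hbb : forall k, b (lshift 1 k) = 0 by apply: qb2; lra.
have hccne : cc R kk beta zs != 0 by rewrite gt_eqF.
have has : a s0 = 0.
  have := RA (lshift 1 ord_max); rewrite col_l // ha hbb !mulr0 subr0 eqxx mulr1.
  rewrite big1 ?add0r; last by move=> k _; rewrite ha mul0r.
  by move/eqP; rewrite mulf_eq0 (negbTE hccne) orbF => /eqP.
have hbs : b s0 = 0.
  have := RB (lshift 1 ord_max); rewrite col_l // ha hbb !mulr0 addr0 eqxx mulr1.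
  rewrite big1 ?add0r; last by move=> k _; rewrite hbb mul0r.
  by move/eqP; rewrite mulf_eq0 (negbTE hccne) orbF => /eqP.
apply: (negP u0); apply/eqP/matrixP => i j; rewrite (ord1 i) mxE.
case: (split_ordP j) => k ->.
  by apply: c_eq0; [exact: ha|exact: hbb].
by rewrite (ord1 k); apply: c_eq0; [exact: has|exact: hbs].
Qed.
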